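(* For every positive integer $n$, the Wiener indices of the polyphenyl ortho-chain $\overline{O}_n$, the polyphenyl meta-chain $\overline{M}_n$ and the polyphenyl para-chain $\overline{P}_n$ are $$W(\overline{O}_n)=12n^3+36n^2-21n,\quad W(\overline{M}_n)=18n^3+18n^2-9n,\quad W(\overline{P}_n)=24n^3+3n.$$
   Context: The Wiener index is $W(G)=\sum_{\{u,v\}\subseteq V(G)}d_G(u,v)$, $d_G$ the shortest-path distance. A polyphenyl hexagonal chain $\overline{G}_n=\overline{H}_0\cdots\overline{H}_{n-1}$ of length $n$ consists of pairwise vertex-disjoint hexagons $\overline{H}_0,\dots,\overline{H}_{n-1}$ together with cut-edges: $\overline{G}_1=\overline{H}_0$, and for $k\ge1$, $\overline{G}_{k+1}$ is obtained from $\overline{G}_k$ by adding $\overline{H}_k$ and a cut-edge joining a vertex $c_k$ of $\overline{H}_k$ to a vertex $t_k$ of $\overline{H}_{k-1}$, where for $k\ge2$, $t_k\ne c_{k-1}$. For $k\ge1$, vertices of $\overline{H}_k$ at distance $1,2,3$ from $c_k$ are denoted $o_k,m_k,p_k$ (ortho, meta, para). The polyphenyl ortho-chain $\overline{O}_n$ has $t_k=o_{k-1}$ for all $2\le k\le n-1$; the polyphenyl meta-chain $\overline{M}_n$ has $t_k=m_{k-1}$ and the polyphenyl para-chain $\overline{P}_n$ has $t_k=p_{k-1}$ for all $2\le k\le n-1$ (vacuous for $n\le2$). *)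

(* Defs.v *)
From mathcomp Require Import all_boot.
Unset Printing Implicit Defensive.

Fixpoint within {T : finType} (e : rel T) (k : nat) (x y : T) : bool :=
  match k with
  | 0 => x == y
  | k'.+1 => within e k' x y || [exists z, within e k' x z && e z y]
  end.

(* Shortest-path distance: least k such that y is reachable from x by a walk
   of length <= k (searched in 0 .. #|T|-1, enough for connected graphs). *)
Definition gdist {T : finType} (e : rel T) (x y : T) : nat :=
  find (fun k => within e k x y) (iota 0 #|T|).

(* Wiener index: sum of distances over unordered pairs {u,v}, computed as
   half of the sum over ordered pairs (distance is symmetric, d(u,u)=0). *)
Definition wiener {T : finType} (e : rel T) : nat :=
  (\sum_(x : T) \sum_(y : T) gdist e x y) %/ 2.

(* Vertex (k, i) is vertex i of hexagon
   H_k, hexagon vertices labelled cyclically 0..5. The attachment vertex c_k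
   of H_k (k >= 1) is labelled 0, and the cut-edge joins c_k = (k,0) to
   t_k = (k-1, t k) in H_(k-1). *)
Definition pchain_edge (n : nat) (t : nat -> 'I_6) : rel ('I_n * 'I_6) :=
  fun a b =>
    ((a.1 == b.1 :> nat) &&
       (((a.2 + 1) %% 6 == b.2) || ((b.2 + 1) %% 6 == a.2)))
    || [&& (b.1 == a.1.+1 :> nat), (b.2 == 0 :> nat) & (a.2 == t b.1)]
    || [&& (a.1 == b.1.+1 :> nat), (a.2 == 0 :> nat) & (b.2 == t a.1)].

Definition hexd (i : nat) : nat := minn i (6 - i).

(* t_k is at distance d from c_(k-1) (= label 0) for all 2 <= k <= n-1:
   d = 1 ortho, d = 2 meta, d = 3 para. t_1 is arbitrary. *)
Definition chain_kind (n : nat) (t : nat -> 'I_6) (d : nat) : Prop :=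
  forall k, 2 <= k <= n.-1 -> hexd (t k) = d.

(* Main.v *)
Require Import Defs.
From mathcomp Require Import all_boot.
From mathcomp Require Import zify.

Definition cd (x y : nat) : nat := let u := (x - y) + (y - x) in minn u (6 - u).
Definition adj (w y : nat) : bool := ((w + 1) %% 6 == y) || ((y + 1) %% 6 == w).
Definition Sg (t : nat -> 'I_6) (i j : nat) := \sum_(i <= k < j) (cd 0 (t k.+1) + 1).
Definition Dlt (t : nat -> 'I_6) (i x j y : nat) := cd x (t i.+1) + 1 + Sg t i.+1 j + cd 0 y.
Definition Dn (t : nat -> 'I_6) (i x j y : nat) :=
  if i == j then cd x y else if i < j then Dlt t i x j y else Dlt t j y i x.
Definition edge_nat (t : nat -> 'I_6) (k w j y : nat) :=
  ((k == j) && adj w y) || [&& j == k.+1, y == 0 & w == t j]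
  || [&& k == j.+1, w == 0 & y == t k].

Lemma all6 {P : nat -> bool} : all P (iota 0 6) -> forall x, x < 6 -> P x.
Proof. by move=> /allP H x Hx; apply: H; rewrite mem_iota. Qed.

Lemma all6_2 {P : nat -> nat -> bool} :
  all (fun x => all (P x) (iota 0 6)) (iota 0 6) -> forall x y, x < 6 -> y < 6 -> P x y.
Proof. move=> H x y hx hy; exact: (all6 (all6 H x hx) y hy). Qed.

Lemma all6_3 {P : nat -> nat -> nat -> bool} :
  all (fun x => all (fun y => all (P x y) (iota 0 6)) (iota 0 6)) (iota 0 6) ->
  forall x y w, x < 6 -> y < 6 -> w < 6 -> P x y w.
Proof. move=> H x y w hx hy hw; exact: (all6 (all6_2 H x y hx hy) w hw). Qed.

Lemma F1 x y w : x < 6 -> y < 6 -> w < 6 -> adj w y -> cd x y <= cd x w + 1.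
Proof.
have H : all (fun x => all (fun y => all (fun w => adj w y ==> (cd x y <= cd x w + 1))
   (iota 0 6)) (iota 0 6)) (iota 0 6) by vm_compute.
move=> hx hy hw; exact/implyP/(all6_3 H x y w hx hy hw).
Qed.

Lemma F2 x y : x < 6 -> y < 6 -> (cd x y == 0) = (x == y).
Proof.
have H : all (fun x => all (fun y => (cd x y == 0) == (x == y)) (iota 0 6)) (iota 0 6)
  by vm_compute.
move=> hx hy; have := all6_2 H x y hx hy. by move=> /eqP.
Qed.

Lemma F3 x y : x < 6 -> y < 6 -> x != y ->
  exists2 w, w < 6 & adj w y && (cd x w + 1 == cd x y).
Proof.
have H : all (fun x => all (fun y => (x != y) ==>
   has (fun w => adj w y && (cd x w + 1 == cd x y)) (iota 0 6)) (iota 0 6)) (iota 0 6)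
  by vm_compute.
move=> hx hy hxy; have /hasP[w] := implyP (all6_2 H x y hx hy) hxy.
by rewrite mem_iota => hw; exists w.
Qed.

Lemma F4 x y : cd x y <= 3.
Proof. rewrite /cd; lia. Qed.

Lemma cd_sym x y : cd x y = cd y x.
Proof. by rewrite /cd addnC. Qed.

Lemma cdxx x : cd x x = 0.
Proof. by rewrite /cd subnn. Qed.

Lemma F5 T : T < 6 -> \sum_(x < 6) cd x T = 9.
Proof.
have H : all (fun T => cd 0 T + (cd 1 T + (cd 2 T + (cd 3 T + (cd 4 T + (cd 5 T + 0))))) == 9) (iota 0 6)
  by vm_compute.
move=> hT; rewrite !big_ord_recl big_ord0 /=; apply/eqP; exact: (all6 H T hT).
Qed.

Lemma Sg_recr t i j : i <= j -> Sg t i j.+1 = Sg t i j + (cd 0 (t j.+1) + 1).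
Proof. by move=> h; rewrite /Sg big_nat_recr. Qed.

Lemma Sg_recl t i j : i < j -> Sg t i j = cd 0 (t i.+1) + 1 + Sg t i.+1 j.
Proof. by move=> h; rewrite /Sg big_ltn. Qed.

Lemma Sg0 t i : Sg t i i = 0.
Proof. by rewrite /Sg big_geq. Qed.

Lemma Sg_le t i j : Sg t i j <= 4 * (j - i).
Proof.
rewrite /Sg -[4 * _]mulnC -sum_nat_const_nat big_nat_cond [X in _ <= X]big_nat_cond.
by apply: leq_sum => k _; have := F4 0 (t k.+1); lia.
Qed.

Lemma Db (t : nat -> 'I_6) i x k w j y : x < 6 -> w < 6 -> y < 6 ->
  edge_nat t k w j y -> Dn t i x j y <= Dn t i x k w + 1.
Proof.
move=> hx hw hy; rewrite /edge_nat.
case/orP => [/orP[]|].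
- case/andP=> /eqP-> ha; rewrite /Dn; case: (ltngtP i j) => h.
  + rewrite /Dlt; have := F1 0 y w (isT : 0 < 6) hy hw ha; lia.
  + rewrite /Dlt; have := F1 (t j.+1) y w (ltn_ord _) hy hw ha.
    rewrite !(cd_sym (t j.+1)); lia.
  + exact: F1.
- case/and3P=> /eqP-> /eqP-> /eqP->; rewrite /Dn.
  case: (ltngtP i k) => h.
  + have e1 : (i == k.+1) = false by lia.
    have e2 : (i < k.+1) = true by lia.
    rewrite e1 e2 /Dlt Sg_recr // cdxx; lia.
  + have hk : (k < i) by [].
    case: (ltngtP i k.+1) => h2; first lia.
    * rewrite /Dlt (Sg_recl _ _ _ h2) cdxx; lia.
    * rewrite h2 /Dlt Sg0 cdxx cd_sym; lia.
  + subst; rewrite ltnSn (ltn_eqF (ltnSn k)) /Dlt Sg0 cdxx; lia.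
- case/and3P=> /eqP-> /eqP-> /eqP->; rewrite /Dn.
  case: (ltngtP i j) => h.
  + have e1 : (i == j.+1) = false by lia.
    have e2 : (i < j.+1) = true by lia.
    rewrite e1 e2 /Dlt Sg_recr // cdxx; lia.
  + case: (ltngtP i j.+1) => h2; first lia.
    * rewrite /Dlt (Sg_recl _ _ _ h2) cdxx; lia.
    * rewrite h2 /Dlt Sg0 cdxx cd_sym; lia.
  + subst; rewrite ltnSn (ltn_eqF (ltnSn j)) /Dlt Sg0 cdxx; lia.
Qed.

Lemma Dc (t : nat -> 'I_6) n i x j y : i < n -> j < n -> x < 6 -> y < 6 ->
  (i != j) || (x != y) ->
  exists k w, [/\ k < n, w < 6, edge_nat t k w j y & Dn t i x k w + 1 = Dn t i x j y].
Proof.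
move=> hi hj hx hy hne; rewrite /edge_nat /Dn.
case: (ltngtP i j) => h.
- have [y0|ny0] := eqVneq y 0.
  + subst y; exists j.-1, (t j); split; [lia | exact: ltn_ord | |].
    * by rewrite prednK ?eqxx ?orbT //; lia.
    * have hj' : j = j.-1.+1 by lia.
      case: (ltngtP i j.-1) => h2; first last.
      - rewrite /Dlt h2 -hj' Sg0 cdxx; lia.
      - lia.
      - have := Sg_recr t i.+1 j.-1 h2; rewrite -hj' => e; rewrite /Dlt e cdxx; lia.
  + have [w hw /andP[ha /eqP hc]] := F3 0 y isT hy (ltac:(by rewrite eq_sym)).
    exists j, w; split => //; first by rewrite eqxx ha.
    rewrite (ltn_eqF h) h /Dlt; lia.
- have [yt|nyt] := eqVneq y (t j.+1).
  + subst y; exists j.+1, 0; split => //; first lia.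
    * by rewrite !eqxx !orbT.
    * case: (ltngtP i j.+1) => h2; first lia.
      - rewrite /Dlt (Sg_recl _ _ _ h2) cdxx; lia.
      - rewrite h2 /Dlt Sg0 cdxx cd_sym; lia.
  + have [w hw /andP[ha /eqP hc]] := F3 (t j.+1) y (ltn_ord _) hy (ltac:(by rewrite eq_sym)).
    exists j, w; split => //; first by rewrite eqxx ha.
    rewrite (gtn_eqF h) ltnNge (ltnW h) /= /Dlt !(cd_sym _ (t j.+1)); lia.
- subst; rewrite eqxx /= in hne.
  have [w hw /andP[ha /eqP hc]] := F3 x y hx hy hne.
  by exists j, w; split => //; rewrite ?eqxx ?ha.
Qed.

Lemma within_iff (T : finType) (e : rel T) (D : T -> T -> nat) (a : T) :
  (forall b, (D a b == 0) = (a == b)) ->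
  (forall z b, e z b -> D a b <= (D a z).+1) ->
  (forall b, a != b -> exists2 z, e z b & (D a z).+1 = D a b) ->
  forall k b, within e k a b = (D a b <= k).
Proof.
move=> H0 H1 H2; elim=> [|k IH] b /=; first by rewrite leqn0 H0.
apply/idP/idP.
- case/orP => [|/existsP[z /andP[]]]; first by rewrite IH => h; apply: leq_trans h _.
  by rewrite IH => hz /H1 hb; apply: leq_trans hb _.
- rewrite leq_eqVlt ltnS; case/orP => [/eqP hk|]; last by rewrite IH => ->.
  have : a != b by rewrite -H0 hk.
  case/H2 => z ezb hz; apply/orP; right; apply/existsP; exists z.
  by rewrite IH ezb andbT -ltnS hz hk.
Qed.

Lemma find_iota m N s : s <= m < s + N -> find (fun k => m <= k) (iota s N) = m - s.
Proof.
elim: N s => [|N IH] s /=; first lia.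
move=> h; have [hm|hm] := leqP m s; first lia.
rewrite IH; lia.
Qed.

Definition Dv {n} (t : nat -> 'I_6) (a b : 'I_n * 'I_6) := Dn t a.1 a.2 b.1 b.2.

Lemma edgeE n t (k j : 'I_n) (w y : 'I_6) :
  pchain_edge n t (k, w) (j, y) = edge_nat t k w j y.
Proof. by []. Qed.

Lemma Dn_bound t i x j y n : i < n -> j < n -> Dn t i x j y < 6 * n.
Proof.
move=> hi hj; rewrite /Dn; case: ifP => h0; first by have := F4 x y; lia.
case: ifP => h1; rewrite /Dlt; move/negbT: h0 => h0.
- have := Sg_le t i.+1 j; have := F4 x (t i.+1); have := F4 0 y; lia.
- move/negbT: h1 => h1; have := Sg_le t j.+1 i; have := F4 y (t j.+1); have := F4 0 x; lia.
Qed.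

Lemma gdistE n t a b : gdist (pchain_edge n t) a b = Dv t a b.
Proof.
rewrite /gdist (@eq_find _ _ (fun k => Dv t a b <= k)); last first.
  move=> k; apply: within_iff => {k}.
  - case=> j y; case: a => i x; rewrite /Dv /= /Dn xpair_eqE.
    case: (ltngtP i j) => h /=.
    + rewrite (_ : (i == j) = false); last by apply/eqP => E; move: h; rewrite E ltnn.
      rewrite /Dlt; apply/negbTE; lia.
    + rewrite (_ : (i == j) = false); last by apply/eqP => E; move: h; rewrite E ltnn.
      rewrite /Dlt; apply/negbTE; lia.
    + rewrite (_ : (i == j) = true); last by apply/eqP/val_inj.
      by rewrite F2.
  - case=> k w [j y]; case: a => i x; rewrite edgeE /Dv /= => he.
    by have := @Db t i x k w j y (ltn_ord x) (ltn_ord w) (ltn_ord y) he; rewrite addn1.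
  - case=> j y; case: a => i x; rewrite xpair_eqE negb_and /Dv /= => hne.
    have [k [w [hk hw he hD]]] := @Dc t n i x j y (ltn_ord i) (ltn_ord j) (ltn_ord x) (ltn_ord y) hne.
    exists (Ordinal hk, Ordinal hw); first by rewrite edgeE.
    by rewrite /= -hD addn1.
rewrite find_iota ?subn0 // card_prod !card_ord add0n.
case: a b => i x [j y]; rewrite /Dv /=; have := @Dn_bound t i x j y n (ltn_ord i) (ltn_ord j).
lia.
Qed.

Lemma sum_pair n (F : 'I_n * 'I_6 -> nat) :
  \sum_p F p = \sum_(i < n) \sum_(x < 6) F (i, x).
Proof. by rewrite pair_big; apply: eq_bigr => -[]. Qed.

Lemma sum_cd0 : \sum_(y < 6) cd 0 y = 9.
Proof. by rewrite !big_ord_recl big_ord0. Qed.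

Lemma blk_lt t i j : \sum_(x < 6) \sum_(y < 6) Dlt t i x j y = 144 + 36 * Sg t i.+1 j.
Proof.
rewrite /Dlt.
have E : forall x : 'I_6, \sum_(y < 6) (cd x (t i.+1) + 1 + Sg t i.+1 j + cd 0 y)
   = 6 * (cd x (t i.+1) + 1 + Sg t i.+1 j) + 9.
  by move=> x; rewrite big_split /= sum_cd0 sum_nat_const card_ord.
rewrite (eq_bigr _ (fun x _ => E x)) big_split /= sum_nat_const card_ord.
rewrite -big_distrr /= !big_split /= !sum_nat_const !card_ord F5 //=; lia.
Qed.

Definition Blk t i j := if i == j then 54 else if i < j then 144 + 36 * Sg t i.+1 j
  else 144 + 36 * Sg t j.+1 i.

Lemma blkE t i j : \sum_(x < 6) \sum_(y < 6) Dn t i x j y = Blk t i j.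
Proof.
rewrite /Dn /Blk; case: ltngtP => h.
- exact: blk_lt.
- by rewrite exchange_big /= blk_lt.
- rewrite (eq_bigr (fun _ => 9)) ?sum_nat_const ?card_ord // => x _.
  under eq_bigr do rewrite cd_sym; exact: F5.
Qed.

Lemma cd0_hexd y : cd 0 y = hexd y.
Proof. by rewrite /cd /hexd sub0n add0n subn0. Qed.

Lemma Sg_kind n t d i j : chain_kind n t d -> 1 <= i <= j -> j < n ->
  Sg t i j = (j - i) * (d + 1).
Proof.
move=> hk /andP[h1 h2] hj; rewrite /Sg -sum_nat_const_nat.
apply: eq_big_nat => k /andP[hk1 hk2]; rewrite cd0_hexd hk //; lia.
Qed.

Definition G d i j := if i == j then 54 else if i < j then 144 + 36 * ((j - i.+1) * (d + 1))
  else 144 + 36 * ((i - j.+1) * (d + 1)).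

Lemma BlkG n t d i j : chain_kind n t d -> i < n -> j < n -> Blk t i j = G d i j.
Proof.
move=> hk hi hj; rewrite /Blk /G; case: ltngtP => h //.
- by rewrite (@Sg_kind n t d _ _ hk) //; lia.
- by rewrite (@Sg_kind n t d _ _ hk) //; lia.
Qed.

Lemma sumQ m : 2 * \sum_(i < m) (m - i.+1) = m * (m - 1).
Proof.
elim: m => [|m IH]; first by rewrite big_ord0.
rewrite big_ord_recr /= subnn addn0.
rewrite (eq_bigr (fun i : 'I_m => (m - i.+1) + 1)); last by move=> i _; have := ltn_ord i; lia.
rewrite big_split /= sum_nat_const card_ord. rewrite subSS subn0 mulnDr IH; case: m IH => //= m _; rewrite subSS subn0; nia.
Qed.

Lemma sumA d m : \sum_(i < m) G d i m = 144 * m + 36 * (d + 1) * \sum_(i < m) (m - i.+1).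
Proof.
rewrite (eq_bigr (fun i : 'I_m => 144 + 36 * (d + 1) * (m - i.+1))); last first.
  move=> i _; rewrite /G (ltn_eqF (ltn_ord i)) ltn_ord; lia.
by rewrite big_split /= sum_nat_const card_ord -big_distrr /=; lia.
Qed.

Lemma sumB d m : \sum_(i < m) G d m i = 144 * m + 36 * (d + 1) * \sum_(i < m) (m - i.+1).
Proof.
rewrite -sumA; apply: eq_bigr => i _.
have hi := ltn_ord i.
have e1 : (m == i) = false by lia.
have e2 : (m < i) = false by lia.
have e3 : (i == m :> nat) = false by lia.
have e4 : (i < m) = true by lia.
by rewrite /G e1 e2 e3 e4.
Qed.

Lemma tot d m : \sum_(i < m) \sum_(j < m) G d i j =
  54 * m + 144 * m * (m - 1) + 12 * (d + 1) * m * (m - 1) * (m - 2).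
Proof.
elim: m => [|m IH]; first by rewrite big_ord0 !muln0.
rewrite big_ord_recr /=.
rewrite (eq_bigr (fun i : 'I_m => \sum_(j < m) G d i j + G d i m)); last first.
  by move=> i _; rewrite big_ord_recr.
rewrite big_split /= IH big_ord_recr /= sumA sumB {1}/G eqxx.
have := sumQ m; move: (\sum_(i < m) (m - i.+1)) => Q hQ; clear IH.
rewrite -addnA (_ : 144 * m + 36 * (d + 1) * Q + (144 * m + 36 * (d + 1) * Q + 54) =
   288 * m + 36 * (d + 1) * (2 * Q) + 54); last lia.
rewrite hQ; clear hQ.
case: m => [|m]; first by rewrite /= !muln0.
case: m => [|m]; first by rewrite /= !muln0; lia.
rewrite !subSS !subn0.
nia.
Qed.

Lemma wienerE n t d : chain_kind n t d -> wiener (pchain_edge n t) =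
  27 * n + 72 * n * (n - 1) + 6 * (d + 1) * n * (n - 1) * (n - 2).
Proof.
move=> hk; rewrite /wiener.
under eq_bigr do under eq_bigr do rewrite gdistE.
rewrite sum_pair.
under eq_bigr do under eq_bigr do rewrite sum_pair.
under eq_bigr do rewrite exchange_big /=.
rewrite /Dv /=.
under eq_bigr do under eq_bigr do rewrite blkE.
rewrite (eq_bigr (fun i : 'I_n => \sum_(j < n) G d i j)); last first.
  by move=> i _; apply: eq_bigr => j _; rewrite (@BlkG n t d i j hk (ltn_ord i) (ltn_ord j)).
rewrite tot.
rewrite (_ : 54 * n + 144 * n * (n - 1) + 12 * (d + 1) * n * (n - 1) * (n - 2) =
  2 * (27 * n + 72 * n * (n - 1) + 6 * (d + 1) * n * (n - 1) * (n - 2))).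
  by rewrite mulKn.
rewrite !mulnDr !mulnA; lia.
Qed.

Lemma fO m : 27 * m.+2 + 72 * m.+2 * m.+1 + 6 * (1+1) * m.+2 * m.+1 * m + 21 * m.+2 = 12 * m.+2 ^ 3 + 36 * m.+2 ^ 2.
Proof. rewrite !expnS expn0 !muln1. nia. Qed.
Lemma fM m : 27 * m.+2 + 72 * m.+2 * m.+1 + 6 * (2+1) * m.+2 * m.+1 * m + 9 * m.+2 = 18 * m.+2 ^ 3 + 18 * m.+2 ^ 2.
Proof. rewrite !expnS expn0 !muln1. nia. Qed.
Lemma fP m : 27 * m.+2 + 72 * m.+2 * m.+1 + 6 * (3+1) * m.+2 * m.+1 * m = 24 * m.+2 ^ 3 + 3 * m.+2.
Proof. rewrite !expnS expn0 !muln1. nia. Qed.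

Lemma sub12 m : m.+2 - 1 = m.+1. Proof. lia. Qed.
Lemma sub22 m : m.+2 - 2 = m. Proof. lia. Qed.

Theorem corollary3p3 (n : nat) : 0 < n ->
  (forall t : nat -> 'I_6, chain_kind n t 1 ->
     wiener (pchain_edge n t) = 12 * n ^ 3 + 36 * n ^ 2 - 21 * n) /\
  (forall t : nat -> 'I_6, chain_kind n t 2 ->
     wiener (pchain_edge n t) = 18 * n ^ 3 + 18 * n ^ 2 - 9 * n) /\
  (forall t : nat -> 'I_6, chain_kind n t 3 ->
     wiener (pchain_edge n t) = 24 * n ^ 3 + 3 * n).
Proof.
move=> hn; split; [|split] => t hk; rewrite (@wienerE n t _ hk);
  case: n hn hk => [|[|m]] // _ _; rewrite sub12 sub22.
- by rewrite -fO addnK.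
- by rewrite -fM addnK.
- exact: fP.
Qed.
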